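(* Let $g\ge 3$ be an odd integer and let $m=\frac{g^2+1}{2}$. Let $C_m(\{g\};\{1\})$ be the mixed graph with vertex set $\{x_0,\dots,x_{m-1}\}$ (indices modulo $m$), arc set $\{(x_i,x_{i+g}) : 0\le i\le m-1\}$ and edge set $\{x_ix_{i+1} : 0\le i\le m-1\}$. Then $C_m(\{g\};\{1\})$ is a $[1,2;g]$-mixed graph of order $\frac{g^2+1}{2}$.
   Context: A mixed graph is a finite simple graph that may contain both edges and arcs. A $[z,r;g]$-mixed graph is a mixed graph in which every vertex is the tail of exactly $z$ arcs, the head of exactly $z$ arcs, and is incident with exactly $r$ edges, and whose girth is $g$. Walks traverse edges in either direction and arcs only in their direction; a cycle is a closed walk with no repeated vertices (other than start = end) and no repeated edge or arc; the girth is the length of a shortest cycle. *)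

(* Defs.v *)
From mathcomp Require Import all_boot.
Set Implicit Arguments. Unset Strict Implicit. Unset Printing Implicit Defensive.

Section MixedGraphs.
Variable T : finType.

(* A mixed graph on the finite vertex type T: E is the (symmetric) edge
   relation, A the arc relation (A x y = arc from tail x to head y).
   Simplicity: no loops, no pair joined both by an edge and an arc,
   no pair of opposite arcs (these would be an edge). *)
Definition mixed_graph (E A : rel T) : Prop :=
  [/\ symmetric E, irreflexive E, irreflexive A,
      (forall x y, A x y -> ~~ E x y) & (forall x y, A x y -> ~~ A y x)].

Definition cyc_steps (c : seq T) : seq (T * T) := zip c (rot 1 c).

Definition step_ok (E A : rel T) (p : T * T) : bool := E p.1 p.2 || A p.1 p.2.

Definition same_link (E A : rel T) (p q : T * T) : bool :=
  (A p.1 p.2 && (p == q)) || (E p.1 p.2 && ((p == q) || (p == (q.2, q.1)))).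

(* c = [x_0; ...; x_{k-1}] represents the cycle x_0 x_1 ... x_{k-1} x_0 of length k:
   a closed walk with no repeated vertex and no repeated edge or arc. *)
Definition is_cycle (E A : rel T) (c : seq T) : Prop :=
  [/\ 0 < size c, uniq c, all (step_ok E A) (cyc_steps c)
    & pairwise (fun p q => ~~ same_link E A p q) (cyc_steps c)].

Definition girth_is (E A : rel T) (g : nat) : Prop :=
  (exists c, is_cycle E A c /\ size c = g) /\
  (forall c, is_cycle E A c -> g <= size c).

Definition zrg_mixed_graph (E A : rel T) (z r g : nat) : Prop :=
  [/\ mixed_graph E A,
      (forall x, #|[set y | A x y]| = z),
      (forall x, #|[set y | A y x]| = z),
      (forall x, #|[set y | E x y]| = r)
    & girth_is E A g].

End MixedGraphs.

(* C_m({a};{1}) on vertices 'I_m (x_i <-> i) *)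
Definition circ_arc (m a : nat) : rel 'I_m :=
  fun i j => val j == (i + a) %% m.
Definition circ_edge (m : nat) : rel 'I_m :=
  fun i j => (val j == (i + 1) %% m) || (val i == (j + 1) %% m).
Arguments circ_arc m a : clear implicits.
Arguments circ_edge m : clear implicits.

(* Main.v *)
Require Import Defs.
From mathcomp Require Import all_boot zify.

Lemma modn_cases x m : 0 < m -> x < 2*m -> x %% m = if x < m then x else x - m.
Proof.
move=> m0 hx; case: ifP => h; first by rewrite modn_small.
rewrite {1}(_ : x = (x - m) + m); last by lia.
rewrite modnDr modn_small //; lia.
Qed.

Ltac modsimp m := rewrite /=; repeat match goal with
 | |- context [?x %% m] => rewrite (@modn_cases x m); [ case: ifP => ? | lia | lia]
 end.


Section Gen.
Variable T : finType.

Lemma size_steps (c : seq T) : size (cyc_steps c) = size c.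
Proof. by rewrite /cyc_steps size_zip size_rot minnn. Qed.

Lemma nth_steps (x0 : T) (c : seq T) i : i < size c ->
  nth (x0, x0) (cyc_steps c) i = (nth x0 c i, nth x0 c ((i + 1) %% size c)).
Proof.
move=> hi; rewrite /cyc_steps nth_zip ?size_rot //; congr (_, _).
case: c hi => [|x l] //= hi; rewrite rot1_cons nth_rcons.
case: ltnP => h.
  by rewrite modn_small ?addn1 //; lia.
have -> : i = size l by lia.
by rewrite eqxx addn1 modnn.
Qed.

Lemma pair_ok (x0 : T) (c : seq T) : uniq c -> 2 < size c ->
  pairwise (fun p q => (p.1 != q.1) && (p != (q.2, q.1))) (cyc_steps c).
Proof.
move=> u hs; apply/(pairwiseP (x0, x0)) => i j; rewrite !inE /= size_steps => hi hj hij.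
rewrite !nth_steps //= xpair_eqE !nth_uniq //; try (apply: ltn_pmod; lia).
move: hij; rewrite !modn_cases; try lia.
case: ifP; case: ifP; lia.
Qed.

Lemma chain_zip (l : seq T) x y :
  sorted (fun p q : T * T => p.2 == q.1) (zip (x :: l) (rcons l y)).
Proof.
elim: l x => [|z l IH] x //=.
case E: (rcons l y) => [|h t0]; first by case: l E IH.
have := IH z; rewrite E /= => ->; by rewrite eqxx.
Qed.
End Gen.
Section G.
Variables (k m g : nat).
Hypotheses (hk : 1 <= k) (hg : g = 2*k+1) (hm : m = k*g+k+1).

Lemma m_form : m = 2*(k*k+k)+1. Proof. rewrite hm hg; nia. Qed.
Lemma m_gt0 : 0 < m. Proof. lia. Qed.
Lemma g_lt_m : g < m. Proof. have : 1 * g <= k * g by rewrite leq_mul2r hk orbT. lia. Qed.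

Local Notation E := (circ_edge m).
Local Notation A := (circ_arc m g).

Lemma mixedG : mixed_graph E A.
Proof.
have gm := g_lt_m.
split.
- by move=> x y; rewrite /circ_edge orbC.
- move=> x; rewrite /circ_edge orbb; move: (ltn_ord x) => ?; modsimp m; lia.
- move=> x; rewrite /circ_arc; move: (ltn_ord x) => ?; modsimp m; lia.
- move=> x y; rewrite /circ_arc /circ_edge; move: (ltn_ord x) => ?; move: (ltn_ord y) => ?;
  modsimp m; lia.
- move=> x y; rewrite /circ_arc; move: (ltn_ord x) => ?; move: (ltn_ord y) => ?;
  move: m_form => ?; modsimp m; lia.
Qed.

Lemma outdeg x : #|[set y | A x y]| = 1.
Proof.
rewrite (_ : [set y | A x y] = [set Ordinal (ltn_pmod (x + g) m_gt0)]) ?cards1 //.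
by apply/setP => y; rewrite !inE -val_eqE.
Qed.

Lemma indeg x : #|[set y | A y x]| = 1.
Proof.
have gm := g_lt_m.
rewrite (_ : [set y | A y x] = [set Ordinal (ltn_pmod (x + (m - g)) m_gt0)]) ?cards1 //.
apply/setP => y; rewrite !inE -val_eqE /= /circ_arc.
move: (ltn_ord x) => ?; move: (ltn_ord y) => ?; modsimp m; lia.
Qed.

Lemma edeg x : #|[set y | E x y]| = 2.
Proof.
rewrite (_ : [set y | E x y] = [set Ordinal (ltn_pmod (x + 1) m_gt0);
                                   Ordinal (ltn_pmod (x + (m - 1)) m_gt0)]).
  rewrite cards2 -val_eqE /=; move: (ltn_ord x) => ?; modsimp m; lia.
apply/setP => y; rewrite !inE -!val_eqE /= /circ_edge.
move: (ltn_ord x) => ?; move: (ltn_ord y) => ?; modsimp m; lia.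
Qed.

Definition arcb (p : 'I_m * 'I_m) : bool := A p.1 p.2.
Definition plb (p : 'I_m * 'I_m) : bool := (p.2 : nat) == (p.1 + 1) %% m.

Lemma step_cong p : step_ok E A p ->
  (p.2 : nat) + (~~ arcb p && ~~ plb p) = p.1 + g * arcb p + (~~ arcb p && plb p) %[mod m].
Proof.
have gm := g_lt_m.
case: p => x y; rewrite /step_ok /arcb /plb /circ_arc /circ_edge /=.
move: (ltn_ord x) (ltn_ord y) => hx hy.
case ha: (_ == (x + g) %% m); case hp: (_ == (x + 1) %% m);
  rewrite /= ?muln0 ?muln1 ?addn0 ?orbT //= => h; move: ha hp h; modsimp m; lia.
Qed.

Lemma sum_cong (c : seq 'I_m) : all (step_ok E A) (cyc_steps c) ->
  \sum_(p <- cyc_steps c) (~~ arcb p && ~~ plb p) =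
  g * \sum_(p <- cyc_steps c) arcb p + \sum_(p <- cyc_steps c) (~~ arcb p && plb p) %[mod m].
Proof.
move=> hall.
have H : \sum_(p <- cyc_steps c) ((p.2 : nat) + (~~ arcb p && ~~ plb p)) =
  \sum_(p <- cyc_steps c) ((p.1 : nat) + g * arcb p + (~~ arcb p && plb p)) %[mod m].
  rewrite big_seq [in RHS]big_seq.
  apply: (big_rec2 (fun a b => a = b %[mod m])) => // p y1 y2 hp h2.
  have h1 := step_cong p (allP hall p hp).
  by rewrite -modnDml h1 modnDml -modnDmr h2 modnDmr.
rewrite !big_split /= in H.
have e2 : \sum_(p <- cyc_steps c) (p.2 : nat) = \sum_(x <- c) (x : nat).
  rewrite -(big_map snd xpredT (fun x : 'I_m => (x : nat))).
  rewrite (_ : [seq i.2 | i <- cyc_steps c] = rot 1 c); last by apply: unzip2_zip; rewrite size_rot.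
  by apply: perm_big; rewrite (perm_rot 1 c c) perm_refl.
have e1 : \sum_(p <- cyc_steps c) (p.1 : nat) = \sum_(x <- c) (x : nat).
  rewrite -(big_map fst xpredT (fun x : 'I_m => (x : nat))).
  by rewrite (_ : [seq i.1 | i <- cyc_steps c] = c) //; apply: unzip1_zip; rewrite size_rot.
rewrite e1 e2 -big_distrr -!addnA /= in H.
by apply/eqP; move/eqP: H; rewrite eqn_modDl.
Qed.

Lemma key p q : p.2 = q.1 -> E p.1 p.2 -> E q.1 q.2 -> ~~ same_link E A p q -> plb p = plb q.
Proof.
case: p q => [x y] [z w] /= <- hp hq hns.
case hpl: (plb (x, y) == plb (y, w)); first by move/eqP: hpl.
have xw : x = w.
  apply: val_inj; move: hp hq hpl; rewrite /circ_edge /plb /=.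
  move: (ltn_ord x) (ltn_ord y) (ltn_ord w) => hx hy hw; modsimp m; lia.
by rewrite xw /same_link /= -xw hp eqxx !orbT in hns.
Qed.

Lemma same_dir (s : seq ('I_m * 'I_m)) : sorted (fun p q : 'I_m * 'I_m => p.2 == q.1) s ->
  pairwise (fun p q => ~~ same_link E A p q) s -> all (fun p => E p.1 p.2) s ->
  all plb s || all (fun p => ~~ plb p) s.
Proof.
elim: s => [|p [|q t] IH] //=.
  by move=> _ _ _; case: plb.
case/andP=> hpq hst; case/andP=> /andP[hpq' _] hpw; case/and3P => hp hq ht.
have kk := key p q (eqP hpq) hp hq hpq'.
have := IH hst hpw; rewrite /= hq ht => /(_ isT).
by rewrite kk; case: (plb q).
Qed.


Lemma zero_arc c : 0 < size c -> all (step_ok E A) (cyc_steps c) ->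
  pairwise (fun p q => ~~ same_link E A p q) (cyc_steps c) ->
  (forall p, p \in cyc_steps c -> arcb p = false) ->
  all plb (cyc_steps c) || all (fun p => ~~ plb p) (cyc_steps c).
Proof.
move=> hn hall hpw na; apply: same_dir => //.
  by case: c hn {hall hpw na} => [|x l] // _; rewrite /cyc_steps rot1_cons; apply: chain_zip.
apply/allP => p hp; move: (allP hall p hp) (na p hp).
by rewrite /step_ok /arcb => /orP[// | ->].
Qed.

Lemma girth_lb c : is_cycle E A c -> g <= size c.
Proof.
case=> hn _ hall hpw.
have hc := sum_cong c hall.
have htot : \sum_(p <- cyc_steps c) arcb p + \sum_(p <- cyc_steps c) (~~ arcb p && plb p)
   + \sum_(p <- cyc_steps c) (~~ arcb p && ~~ plb p) = size c.
  rewrite -(@size_steps _ c) -sum1_size -!big_split /=.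
  by apply: eq_bigr => p _; case: arcb; case: plb.
have hz : \sum_(p <- cyc_steps c) arcb p = 0 ->
   \sum_(p <- cyc_steps c) (~~ arcb p && plb p) = 0 \/
   \sum_(p <- cyc_steps c) (~~ arcb p && ~~ plb p) = 0.
  move=> ha.
  have na : forall p, p \in cyc_steps c -> arcb p = false.
    by move=> p hp; move: ha; rewrite (big_rem p hp) /=; case: arcb.
  case/orP: (zero_arc c hn hall hpw na) => H; [right | left];
    by apply: big1_seq => p /andP[_ hp]; move: (allP H p hp) => /=; case: (plb p); rewrite ?andbF.
move: hc htot hz.
set a := \sum_(p <- cyc_steps c) arcb p.
set bp := \sum_(p <- cyc_steps c) (~~ arcb p && plb p).
set bm := \sum_(p <- cyc_steps c) (~~ arcb p && ~~ plb p).
move=> hc htot hz.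
rewrite leqNgt; apply/negP => hlt.
have km := m_form.
have gm := g_lt_m.
have ga : g * a = 2 * (k * a) + a by rewrite hg; nia.
case: (posnP a) => ha.
  move: hc; rewrite ha muln0 add0n !modn_small; [|lia|lia].
  by case: (hz ha); lia.
have h2 : g * a <= g * (2 * k) by rewrite leq_mul2l; apply/orP; right; lia.
have h3 : g * (2 * k) = 2 * (2 * (k * k) + k) by rewrite hg; nia.
move: hc; rewrite (modn_small (_ : bm < m)); last by lia.
rewrite modn_cases; [|lia|lia].
case: ifP => hif.
  have : g * 1 <= g * a by rewrite leq_mul2l ha orbT.
  lia.
move: hif => /negbT hif.
case: (leqP a k) => h.
  have : k * a <= k * k by rewrite leq_mul2l h orbT.
  lia.
have : k * (k + 1) <= k * a by rewrite leq_mul2l; apply/orP; right; lia.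
lia.
Qed.


Definition fv j := if j <= k then j * g else k * g + (j - k).
Definition vtx j : 'I_m := Ordinal (ltn_pmod (fv j) m_gt0).
Definition cyc0 := map vtx (iota 0 g).

Lemma fv_lt j : j < g -> fv j < m.
Proof.
move=> hj; rewrite /fv; case: ifP => h; last lia.
have : j * g <= k * g by rewrite leq_mul2r h orbT.
lia.
Qed.

Lemma cyc0_ok : is_cycle E A cyc0 /\ size cyc0 = g.
Proof.
have gm := g_lt_m.
have sz : size cyc0 = g by rewrite size_map size_iota.
have u : uniq cyc0.
  rewrite map_inj_in_uniq ?iota_uniq // => i j; rewrite !mem_iota !add0n.
  move=> /andP[_ hi] /andP[_ hj] /(congr1 val) /=.
  rewrite !modn_small ?fv_lt // /fv.
  case: ifP => h1; case: ifP => h2.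
  - by move/eqP; rewrite eqn_pmul2r; [move/eqP | lia].
  - have : i * g <= k * g by rewrite leq_mul2r h1 orbT.
    lia.
  - have : j * g <= k * g by rewrite leq_mul2r h2 orbT.
    lia.
  - lia.
split=> //; split; rewrite ?sz //; first lia.
- apply/(all_nthP (vtx 0, vtx 0)) => i; rewrite (@size_steps _ cyc0) sz => hi.
  rewrite (@nth_steps _ (vtx 0)) sz // !(nth_map 0) ?size_iota; last 2 first.
  + by apply: ltn_pmod; lia.
  + done.
  rewrite !nth_iota ?add0n; last 2 first.
  + by apply: ltn_pmod; lia.
  + done.
  have hi1 : (i + 1) %% g < g by apply: ltn_pmod; lia.
  rewrite /step_ok /circ_edge /circ_arc /= (modn_small (fv_lt _ hi)) (modn_small (fv_lt _ hi1)).
  case: (ltnP (i + 1) g) => hw.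
    rewrite (modn_small hw) /fv.
    case: (ltnP i k) => hik.
      have ?: (i + 1) * g <= k * g by rewrite leq_mul2r; apply/orP; right; lia.
      have ?: i * g <= k * g by rewrite leq_mul2r; apply/orP; right; lia.
      by repeat case: ifP => ?; modsimp m; lia.
    case: (eqVneq i k) => [eik|?]; first subst i.
      by repeat case: ifP => ?; modsimp m; lia.
    by repeat case: ifP => ?; modsimp m; lia.
  have -> : i + 1 = g by lia.
  rewrite modnn /fv mul0n.
  by repeat case: ifP => ?; modsimp m; lia.
- have hsz : 2 < size cyc0 by rewrite sz; lia.
  apply: sub_pairwise (@pair_ok _ (vtx 0) _ u hsz).
  move=> p q /andP[h1 h2]; apply/negP; rewrite /same_link.
  case/orP=> [/andP[_ /eqP e]|/andP[_ /orP[/eqP e|/eqP e]]].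
  + by rewrite e eqxx in h1.
  + by rewrite e eqxx in h1.
  + by rewrite e eqxx in h2.
Qed.

Lemma main_zrg : zrg_mixed_graph E A 1 2 g.
Proof.
split.
- exact: mixedG.
- exact: outdeg.
- exact: indeg.
- exact: edeg.
- split; last exact: girth_lb.
  by exists cyc0; exact: cyc0_ok.
Qed.

End G.

Theorem lemma5 (g : nat) (hg : 3 <= g) (hodd : odd g) :
  zrg_mixed_graph (circ_edge ((g ^ 2 + 1) %/ 2)) (circ_arc ((g ^ 2 + 1) %/ 2) g) 1 2 g
  /\ #|'I_((g ^ 2 + 1) %/ 2)| = (g ^ 2 + 1) %/ 2.
Proof.
split; last by rewrite card_ord.
have hgk : g = 2 * g./2 + 1 by rewrite -{1}(odd_double_half g) hodd; lia.
apply: (@main_zrg g./2); [lia | done |].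
have e : forall k, (2*k+1)^2 + 1 = (k*(2*k+1)+k+1)*2 by move=> k; rewrite -mulnn; nia.
by rewrite {1}hgk e mulnK // -hgk.
Qed.
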